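(* The rational map $F:(x_0,\dots,x_{2n-1})\mapsto(x'_0,\dots,x'_{2n-1})$ on $\mathbb{R}^{2n}$ (indices modulo $2n$) given by $$x'_{2i}=x_{2i-2}\cdot\frac{x_{2i-4}+x_{2i-1}-1}{x_{2i-2}x_{2i-1}-(1-x_{2i+1})(1-x_{2i-4})},\qquad x'_{2i+1}=x_{2i+3}\cdot\frac{x_{2i+2}+x_{2i+5}-1}{x_{2i+2}x_{2i+3}-(1-x_{2i+5})(1-x_{2i})}$$ is birational, with inverse $G:(x'_0,\dots,x'_{2n-1})\mapsto(x_0,\dots,x_{2n-1})$ given by $$x_{2i}=x'_{2i+2}\cdot\frac{x'_{2i+4}+x'_{2i+1}-1}{x'_{2i+1}x'_{2i+2}-(1-x'_{2i-1})(1-x'_{2i+4})},\qquad x_{2i+1}=x'_{2i-1}\cdot\frac{x'_{2i-3}+x'_{2i}-1}{x'_{2i}x'_{2i-1}-(1-x'_{2i+2})(1-x'_{2i-3})};$$ that is, $G\circ F$ and $F\circ G$ are the identity wherever defined.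
   Context: $F$ is the expression, in corner-invariant coordinates of twisted $n$-gons, of the deep diagonal map $T_3$ (labelled $P'_i=P_{i-2}P_{i+1}\cap P_{i-1}P_{i+2}$); $G$ expresses $T_3^{-1}$. *)

(* Defs.v *)
From mathcomp Require Import all_boot all_order all_algebra.
Set Implicit Arguments. Unset Strict Implicit. Unset Printing Implicit Defensive.
Import Order.TTheory GRing.Theory Num.Theory.
Local Open Scope ring_scope.

Section Defs.
Variable R : realFieldType.
Variable n : nat.

Definition point := 'I_(n.*2) -> R.

Definition cyc (x : point) (k : int) : R :=
  match @insub nat (fun j => j < n.*2)%N _ (absz (k %% (n.*2)%:Z)%Z) with
  | Some j => x j | None => 0 end.

Definition Fnum_even (x : point) (i : int) : R :=
  cyc x (2*i-2) * (cyc x (2*i-4) + cyc x (2*i-1) - 1).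
Definition Fden_even (x : point) (i : int) : R :=
  cyc x (2*i-2) * cyc x (2*i-1) - (1 - cyc x (2*i+1)) * (1 - cyc x (2*i-4)).
Definition Fnum_odd (x : point) (i : int) : R :=
  cyc x (2*i+3) * (cyc x (2*i+2) + cyc x (2*i+5) - 1).
Definition Fden_odd (x : point) (i : int) : R :=
  cyc x (2*i+2) * cyc x (2*i+3) - (1 - cyc x (2*i+5)) * (1 - cyc x (2*i)).

Definition Gnum_even (y : point) (i : int) : R :=
  cyc y (2*i+2) * (cyc y (2*i+4) + cyc y (2*i+1) - 1).
Definition Gden_even (y : point) (i : int) : R :=
  cyc y (2*i+1) * cyc y (2*i+2) - (1 - cyc y (2*i-1)) * (1 - cyc y (2*i+4)).
Definition Gnum_odd (y : point) (i : int) : R :=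
  cyc y (2*i-1) * (cyc y (2*i-3) + cyc y (2*i) - 1).
Definition Gden_odd (y : point) (i : int) : R :=
  cyc y (2*i) * cyc y (2*i-1) - (1 - cyc y (2*i+2)) * (1 - cyc y (2*i-3)).

(* The map F (deep diagonal map T_3 in corner invariants): coordinate j = 2i or 2i+1 *)
Definition mapF (x : point) : point := fun j =>
  let i : int := (j./2)%:Z in
  if odd j then Fnum_odd x i / Fden_odd x i else Fnum_even x i / Fden_even x i.

Definition mapG (y : point) : point := fun j =>
  let i : int := (j./2)%:Z in
  if odd j then Gnum_odd y i / Gden_odd y i else Gnum_even y i / Gden_even y i.

Definition F_defined (x : point) : Prop :=
  forall i : int, Fden_even x i != 0 /\ Fden_odd x i != 0.
Definition G_defined (y : point) : Prop :=
  forall i : int, Gden_even y i != 0 /\ Gden_odd y i != 0.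

End Defs.

(* Main.v *)
Require Import Defs.
From mathcomp Require Import all_boot all_order all_algebra zify ring lra.
Import Order.TTheory GRing.Theory Num.Theory.
Local Open Scope ring_scope.

Section Aux.
Variable R : realFieldType.
Variable n : nat.

Lemma cyc_per (x : point R n) k q : cyc x (k + (n.*2)%:Z * q) = cyc x k.
Proof. by rewrite /cyc addrC mulrC modzMDl. Qed.

Lemma cyc_ord (x : point R n) (j : 'I_(n.*2)) : cyc x (nat_of_ord j)%:Z = x j.
Proof.
rewrite /cyc modz_small; last by apply/andP; split => //; rewrite ltz_nat ltn_ord.
case: insubP => [u _ Hu|]; last by rewrite absz_nat ltn_ord.
by congr (x _); apply: val_inj.
Qed.

Lemma cyc_parity (y : point R n) (Ae Ao : int -> R) :
  (forall i q, Ae (i + n%:Z * q) = Ae i) -> (forall i q, Ao (i + n%:Z * q) = Ao i) ->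
  (forall j : 'I_(n.*2), y j = if odd j then Ao (j./2)%:Z else Ae (j./2)%:Z) ->
  (0 < n)%N -> forall (i : int) (b : bool), cyc y (2*i + b%:Z) = if b then Ao i else Ae i.
Proof.
move=> Pe Po Hy n0 i b.
rewrite /cyc.
have d0 : (n.*2)%:Z != 0 by rewrite eqz_nat -lt0n double_gt0.
have m0 := modz_ge0 (2*i + b%:Z) d0.
have dpos : 0 < (n.*2)%:Z by rewrite ltz_nat double_gt0.
have mlt := ltz_pmod (2*i + b%:Z) dpos.
have Hd := divz_eq (2*i + b%:Z) (n.*2)%:Z.
move: m0 mlt Hd.
set m := ((2*i + b%:Z) %% (n.*2)%:Z)%Z.
set q := ((2*i + b%:Z) %/ (n.*2)%:Z)%Z.
move=> m0 mlt Hd; clearbody m q.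
have mlt' : m < (n.*2)%:Z by [].
set i' := i - n%:Z * q.
have Hi : i = i' + n%:Z * q by rewrite /i'; ring.
clearbody i'.
have Hm : m = 2 * i' + b%:Z by case: b Hd {m0 mlt mlt'} => /=; lia.
have i0 : 0 <= i' by case: b Hm Hd m0 mlt' => /=; lia.
have Ham : (absz m = (absz i').*2 + b)%N by case: b Hm Hd m0 mlt' i0 => /=; lia.
case: insubP => [u _ Hu|]; last by move=> /negP []; rewrite Ham; lia.
rewrite Hy Hu Ham.
case: b {Hm Ham Hd m0 mlt mlt' Hu}; rewrite /= ?addn0 ?addn1 ?odd_double /=.
  by rewrite uphalf_double odd_double /= gez0_abs // Hi Po.
by rewrite half_double gez0_abs // Hi Pe.
Qed.
End Aux.
Section Core.
Variable R : realFieldType.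
Variable n : nat.
Hypothesis n0 : (0 < n)%N.

Lemma cyc_sh (x : point R n) i q a : cyc x (2*(i + n%:Z*q) + a) = cyc x (2*i + a).
Proof.
have -> : 2*(i + n%:Z*q) + a = (2*i + a) + (n.*2)%:Z * q.
  by rewrite -muln2 PoszM; ring.
by rewrite cyc_per.
Qed.

Lemma cyc_sh0 (x : point R n) i q : cyc x (2*(i + n%:Z*q)) = cyc x (2*i).
Proof. by have := cyc_sh x i q 0; rewrite !addr0. Qed.

Lemma cyc_n (x : point R n) a b : a = b -> cyc x a = cyc x b.
Proof. by move=> ->. Qed.

Lemma cycF (x : point R n) i (b : bool) : cyc (mapF x) (2*i + b%:Z) =
  if b then Fnum_odd x i / Fden_odd x i else Fnum_even x i / Fden_even x i.
Proof.
apply: (@cyc_parity _ _ _ (fun i => Fnum_even x i / Fden_even x i) (fun i => Fnum_odd x i / Fden_odd x i)) => //.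
- by move=> i' q; rewrite /Fnum_even /Fden_even !cyc_sh ?cyc_sh0.
- by move=> i' q; rewrite /Fnum_odd /Fden_odd !cyc_sh ?cyc_sh0.
Qed.

Lemma cycG (x : point R n) i (b : bool) : cyc (mapG x) (2*i + b%:Z) =
  if b then Gnum_odd x i / Gden_odd x i else Gnum_even x i / Gden_even x i.
Proof.
apply: (@cyc_parity _ _ _ (fun i => Gnum_even x i / Gden_even x i) (fun i => Gnum_odd x i / Gden_odd x i)) => //.
- by move=> i' q; rewrite /Gnum_even /Gden_even !cyc_sh ?cyc_sh0.
- by move=> i' q; rewrite /Gnum_odd /Gden_odd !cyc_sh ?cyc_sh0.
Qed.

Lemma cycFe (x : point R n) k i : k = 2*i -> cyc (mapF x) k =
  Fnum_even x i / Fden_even x i.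
Proof. by move=> ->; have := cycF x i false; rewrite addr0. Qed.
Lemma cycFo (x : point R n) k i : k = 2*i+1 -> cyc (mapF x) k =
  Fnum_odd x i / Fden_odd x i.
Proof. by move=> ->; have := cycF x i true. Qed.
Lemma cycGe (x : point R n) k i : k = 2*i -> cyc (mapG x) k =
  Gnum_even x i / Gden_even x i.
Proof. by move=> ->; have := cycG x i false; rewrite addr0. Qed.
Lemma cycGo (x : point R n) k i : k = 2*i+1 -> cyc (mapG x) k =
  Gnum_odd x i / Gden_odd x i.
Proof. by move=> ->; have := cycG x i true. Qed.

Lemma GFe (x : point R n) i : F_defined x -> G_defined (mapF x) ->
  Gnum_even (mapF x) i / Gden_even (mapF x) i = cyc x (2*i).
Proof.
move=> HI /(_ i) [HG _].
move: HG (HI (i+1)) (HI (i+2)) (HI i) (HI (i-1)); rewrite /Gnum_even /Gden_even.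
rewrite (@cycFe x (2*i+2) (i+1)); last by ring.
rewrite (@cycFe x (2*i+4) (i+2)); last by ring.
rewrite (@cycFo x (2*i+1) i) //.
rewrite (@cycFo x (2*i-1) (i-1)); last by ring.
rewrite /Fnum_even /Fden_even /Fnum_odd /Fden_odd.
rewrite (@cyc_n x (2 * (i + 1)) (2 * i + 2)); last by ring.
rewrite (@cyc_n x (2 * (i + 1) + 1) (2 * i + 3)); last by ring.
rewrite (@cyc_n x (2 * (i + 1) + 2) (2 * i + 4)); last by ring.
rewrite (@cyc_n x (2 * (i + 1) + 3) (2 * i + 5)); last by ring.
rewrite (@cyc_n x (2 * (i + 1) + 5) (2 * i + 7)); last by ring.
rewrite (@cyc_n x (2 * (i + 1) - 1) (2 * i + 1)); last by ring.
rewrite (@cyc_n x (2 * (i + 1) - 2) (2 * i)); last by ring.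
rewrite (@cyc_n x (2 * (i + 1) - 4) (2 * i - 2)); last by ring.
rewrite (@cyc_n x (2 * (i + 2)) (2 * i + 4)); last by ring.
rewrite (@cyc_n x (2 * (i + 2) + 1) (2 * i + 5)); last by ring.
rewrite (@cyc_n x (2 * (i + 2) + 2) (2 * i + 6)); last by ring.
rewrite (@cyc_n x (2 * (i + 2) + 3) (2 * i + 7)); last by ring.
rewrite (@cyc_n x (2 * (i + 2) + 5) (2 * i + 9)); last by ring.
rewrite (@cyc_n x (2 * (i + 2) - 1) (2 * i + 3)); last by ring.
rewrite (@cyc_n x (2 * (i + 2) - 2) (2 * i + 2)); last by ring.
rewrite (@cyc_n x (2 * (i + 2) - 4) (2 * i)); last by ring.
rewrite (@cyc_n x (2 * (i - 1)) (2 * i - 2)); last by ring.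
rewrite (@cyc_n x (2 * (i - 1) + 1) (2 * i - 1)); last by ring.
rewrite (@cyc_n x (2 * (i - 1) + 2) (2 * i)); last by ring.
rewrite (@cyc_n x (2 * (i - 1) + 3) (2 * i + 1)); last by ring.
rewrite (@cyc_n x (2 * (i - 1) + 5) (2 * i + 3)); last by ring.
rewrite (@cyc_n x (2 * (i - 1) - 1) (2 * i - 3)); last by ring.
rewrite (@cyc_n x (2 * (i - 1) - 2) (2 * i - 4)); last by ring.
rewrite (@cyc_n x (2 * (i - 1) - 4) (2 * i - 6)); last by ring.
move=> HG [? ?] [? ?] [? ?] [? ?].
apply: (canLR (mulfK HG)).
field.
by repeat (apply/andP; split).
Qed.

Lemma GFo (x : point R n) i : F_defined x -> G_defined (mapF x) ->
  Gnum_odd (mapF x) i / Gden_odd (mapF x) i = cyc x (2*i+1).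
Proof.
move=> HI /(_ i) [_ HG].
move: HG (HI (i-1)) (HI (i-2)) (HI i) (HI (i+1)); rewrite /Gnum_odd /Gden_odd.
rewrite (@cycFo x (2*i-1) (i-1)); last by ring.
rewrite (@cycFo x (2*i-3) (i-2)); last by ring.
rewrite (@cycFe x (2*i) i) //.
rewrite (@cycFe x (2*i+2) (i+1)); last by ring.
rewrite /Fnum_even /Fden_even /Fnum_odd /Fden_odd.
rewrite (@cyc_n x (2 * (i + 1)) (2 * i + 2)); last by ring.
rewrite (@cyc_n x (2 * (i + 1) + 1) (2 * i + 3)); last by ring.
rewrite (@cyc_n x (2 * (i + 1) + 2) (2 * i + 4)); last by ring.
rewrite (@cyc_n x (2 * (i + 1) + 3) (2 * i + 5)); last by ring.
rewrite (@cyc_n x (2 * (i + 1) + 5) (2 * i + 7)); last by ring.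
rewrite (@cyc_n x (2 * (i + 1) - 1) (2 * i + 1)); last by ring.
rewrite (@cyc_n x (2 * (i + 1) - 2) (2 * i)); last by ring.
rewrite (@cyc_n x (2 * (i + 1) - 4) (2 * i - 2)); last by ring.
rewrite (@cyc_n x (2 * (i - 1)) (2 * i - 2)); last by ring.
rewrite (@cyc_n x (2 * (i - 1) + 1) (2 * i - 1)); last by ring.
rewrite (@cyc_n x (2 * (i - 1) + 2) (2 * i)); last by ring.
rewrite (@cyc_n x (2 * (i - 1) + 3) (2 * i + 1)); last by ring.
rewrite (@cyc_n x (2 * (i - 1) + 5) (2 * i + 3)); last by ring.
rewrite (@cyc_n x (2 * (i - 1) - 1) (2 * i - 3)); last by ring.
rewrite (@cyc_n x (2 * (i - 1) - 2) (2 * i - 4)); last by ring.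
rewrite (@cyc_n x (2 * (i - 1) - 4) (2 * i - 6)); last by ring.
rewrite (@cyc_n x (2 * (i - 2)) (2 * i - 4)); last by ring.
rewrite (@cyc_n x (2 * (i - 2) + 1) (2 * i - 3)); last by ring.
rewrite (@cyc_n x (2 * (i - 2) + 2) (2 * i - 2)); last by ring.
rewrite (@cyc_n x (2 * (i - 2) + 3) (2 * i - 1)); last by ring.
rewrite (@cyc_n x (2 * (i - 2) + 5) (2 * i + 1)); last by ring.
rewrite (@cyc_n x (2 * (i - 2) - 1) (2 * i - 5)); last by ring.
rewrite (@cyc_n x (2 * (i - 2) - 2) (2 * i - 6)); last by ring.
rewrite (@cyc_n x (2 * (i - 2) - 4) (2 * i - 8)); last by ring.
move=> HG [? ?] [? ?] [? ?] [? ?].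
apply: (canLR (mulfK HG)).
field.
by repeat (apply/andP; split).
Qed.

Lemma FGe (x : point R n) i : G_defined x -> F_defined (mapG x) ->
  Fnum_even (mapG x) i / Fden_even (mapG x) i = cyc x (2*i).
Proof.
move=> HI /(_ i) [HG _].
move: HG (HI (i-1)) (HI (i-2)) (HI (i-1)) (HI i); rewrite /Fnum_even /Fden_even.
rewrite (@cycGe x (2*i-2) (i-1)); last by ring.
rewrite (@cycGe x (2*i-4) (i-2)); last by ring.
rewrite (@cycGo x (2*i-1) (i-1)); last by ring.
rewrite (@cycGo x (2*i+1) i) //.
rewrite /Gnum_even /Gden_even /Gnum_odd /Gden_odd.
rewrite (@cyc_n x (2 * (i - 1)) (2 * i - 2)); last by ring.
rewrite (@cyc_n x (2 * (i - 1) + 1) (2 * i - 1)); last by ring.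
rewrite (@cyc_n x (2 * (i - 1) + 2) (2 * i)); last by ring.
rewrite (@cyc_n x (2 * (i - 1) + 4) (2 * i + 2)); last by ring.
rewrite (@cyc_n x (2 * (i - 1) - 1) (2 * i - 3)); last by ring.
rewrite (@cyc_n x (2 * (i - 1) - 3) (2 * i - 5)); last by ring.
rewrite (@cyc_n x (2 * (i - 2)) (2 * i - 4)); last by ring.
rewrite (@cyc_n x (2 * (i - 2) + 1) (2 * i - 3)); last by ring.
rewrite (@cyc_n x (2 * (i - 2) + 2) (2 * i - 2)); last by ring.
rewrite (@cyc_n x (2 * (i - 2) + 4) (2 * i)); last by ring.
rewrite (@cyc_n x (2 * (i - 2) - 1) (2 * i - 5)); last by ring.
rewrite (@cyc_n x (2 * (i - 2) - 3) (2 * i - 7)); last by ring.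
move=> HG [? ?] [? ?] [? ?] [? ?].
apply: (canLR (mulfK HG)).
field.
by repeat (apply/andP; split).
Qed.

Lemma FGo (x : point R n) i : G_defined x -> F_defined (mapG x) ->
  Fnum_odd (mapG x) i / Fden_odd (mapG x) i = cyc x (2*i+1).
Proof.
move=> HI /(_ i) [_ HG].
move: HG (HI (i+1)) (HI (i+1)) (HI (i+2)) (HI i); rewrite /Fnum_odd /Fden_odd.
rewrite (@cycGo x (2*i+3) (i+1)); last by ring.
rewrite (@cycGe x (2*i+2) (i+1)); last by ring.
rewrite (@cycGo x (2*i+5) (i+2)); last by ring.
rewrite (@cycGe x (2*i) i) //.
rewrite /Gnum_even /Gden_even /Gnum_odd /Gden_odd.
rewrite (@cyc_n x (2 * (i + 1)) (2 * i + 2)); last by ring.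
rewrite (@cyc_n x (2 * (i + 1) + 1) (2 * i + 3)); last by ring.
rewrite (@cyc_n x (2 * (i + 1) + 2) (2 * i + 4)); last by ring.
rewrite (@cyc_n x (2 * (i + 1) + 4) (2 * i + 6)); last by ring.
rewrite (@cyc_n x (2 * (i + 1) - 1) (2 * i + 1)); last by ring.
rewrite (@cyc_n x (2 * (i + 1) - 3) (2 * i - 1)); last by ring.
rewrite (@cyc_n x (2 * (i + 2)) (2 * i + 4)); last by ring.
rewrite (@cyc_n x (2 * (i + 2) + 1) (2 * i + 5)); last by ring.
rewrite (@cyc_n x (2 * (i + 2) + 2) (2 * i + 6)); last by ring.
rewrite (@cyc_n x (2 * (i + 2) + 4) (2 * i + 8)); last by ring.
rewrite (@cyc_n x (2 * (i + 2) - 1) (2 * i + 3)); last by ring.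
rewrite (@cyc_n x (2 * (i + 2) - 3) (2 * i + 1)); last by ring.
move=> HG [? ?] [? ?] [? ?] [? ?].
apply: (canLR (mulfK HG)).
field.
by repeat (apply/andP; split).
Qed.
End Core.

Theorem mainTheorem16 (R : realFieldType) (n : nat) :
  (forall x : point R n,
     F_defined x -> G_defined (mapF x) -> forall j, mapG (mapF x) j = x j) /\
  (forall y : point R n,
     G_defined y -> F_defined (mapG y) -> forall j, mapF (mapG y) j = y j).
Proof.
have [n0|n0] := posnP n.
  by split => x _ _ [m Hm]; exfalso; move: Hm; rewrite n0.
have Hj : forall j : nat, (j%:Z = 2 * (j./2)%:Z + (odd j)%:Z).
  move=> j; rewrite -{1}(odd_double_half j) -muln2 PoszD PoszM addrC mulrC //.
split => [x HF HG j | x HG HF j]; rewrite -[RHS]cyc_ord (Hj j).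
  rewrite /mapG; case: (odd j) => /=.
    by rewrite (@GFo _ _ n0).
  by rewrite addr0 (@GFe _ _ n0).
rewrite /mapF; case: (odd j) => /=.
  by rewrite (@FGo _ _ n0).
by rewrite addr0 (@FGe _ _ n0).
Qed.
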